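(* For all integers $n\ge 1$, $k\ge 0$ and $c\ge k$ with $c\ge1$, $$\left\langle {n \atop k}\right\rangle_{\!c}=\left\langle {n \atop k}\right\rangle_{\!k}$$ (for $k=0$ both sides equal $1$, the right side being read as $\left\langle {n \atop 0}\right\rangle_{\!0}=1$).
   Context: A $c$-rook placement on an $n\times n$ board is a placement of $cn$ rooks on the cells, several rooks being allowed in the same cell, such that every row and every column contains exactly $c$ rooks (equivalently, an $n\times n$ matrix of nonnegative integers with all row and column sums equal to $c$). A drop is a rook lying strictly below the main diagonal, i.e.\ in a cell $(i,j)$ (row $i$, column $j$) with $i>j$, counted with multiplicity. The generalized Eulerian number $\left\langle {n \atop k}\right\rangle_{\!c}$ is the number of $c$-rook placements on the $n\times n$ board with exactly $k$ drops. *)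

(* Defs.v *)
From mathcomp Require Import all_boot.
Set Implicit Arguments. Unset Strict Implicit. Unset Printing Implicit Defensive.

(* A c-rook placement on the n x n board: an n x n matrix of nonnegative
   integers with all row and column sums equal to c.  Since every entry is
   bounded by its row sum c, entries are represented in 'I_c.+1 (this loses
   nothing: every such integer matrix has entries <= c). *)
Definition board (n c : nat) := {ffun 'I_n * 'I_n -> 'I_c.+1}.

Definition is_rook_placement (n c : nat) (A : board n c) : bool :=
  [forall i : 'I_n, \sum_(j < n) (A (i, j) : nat) == c] &&
  [forall j : 'I_n, \sum_(i < n) (A (i, j) : nat) == c].

Definition drops (n c : nat) (A : board n c) : nat :=
  \sum_(i < n) \sum_(j < n | j < i) (A (i, j) : nat).

Definition gen_euler (n k c : nat) : nat :=
  #|[set A : board n c | is_rook_placement A && (drops A == k)]|.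

(* Main.v *)
Require Import Defs.
From mathcomp Require Import all_boot zify.
Set Implicit Arguments. Unset Strict Implicit.

Lemma diag_ge_gen n c (a : 'I_n -> 'I_n -> nat) :
 (forall i, \sum_(j < n) a i j = c) -> (forall j, \sum_(i < n) a i j = c) ->
 forall i, c - \sum_(r < n) \sum_(j < n | j < r) a r j <= a i i.
Proof.
move=> Hr Hc i.
have row : \sum_(j : 'I_n) a i j = a i i + (\sum_(j : 'I_n | j < i) a i j + \sum_(j : 'I_n | ~~ (j <= i)) a i j).
  rewrite (bigD1 i) //=; congr (_ + _).
  rewrite (bigID (fun j : 'I_n => j < i)) /=; congr (_ + _); apply: eq_bigl => j;
  by rewrite -val_eqE /=; case: ltngtP.
have E1 : \sum_(r : 'I_n | r <= i) \sum_(j : 'I_n) a r j = \sum_(r : 'I_n | r<=i) \sum_(j : 'I_n | j<=i) a r j + \sum_(r : 'I_n | r<=i) \sum_(j : 'I_n | ~~ (j <= i)) a r j.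
  rewrite -big_split /=; apply: eq_bigr => r _.
  by rewrite (bigID (fun j : 'I_n => j <= i)).
have E2 : \sum_(j : 'I_n | j <= i) \sum_(r : 'I_n) a r j = \sum_(j : 'I_n | j<=i) \sum_(r : 'I_n | r<=i) a r j + \sum_(j : 'I_n | j<=i) \sum_(r : 'I_n | ~~ (r <= i)) a r j.
  rewrite -big_split /=; apply: eq_bigr => r _.
  by rewrite (bigID (fun j : 'I_n => j <= i)).
have E3 : \sum_(r : 'I_n | r <= i) \sum_(j : 'I_n) a r j = \sum_(j : 'I_n | j <= i) \sum_(r : 'I_n) a r j.
  by rewrite (eq_bigr (fun _ => c)) // [RHS](eq_bigr (fun _ => c)).
rewrite [X in _ + X](exchange_big) in E2.
rewrite [X in X + _](exchange_big) in E2.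
set X := \sum_(r : 'I_n | r <= i) \sum_(j : 'I_n | j <= i) a r j in E1 E2.
set U := \sum_(r : 'I_n | r <= i) \sum_(j : 'I_n | ~~ (j <= i)) a r j in E1.
set D := \sum_(r : 'I_n | ~~ (r <= i)) \sum_(j : 'I_n | j <= i) a r j in E2.
have UD : U = D by apply/(@addnI X); rewrite -E1 -E2.
have RU : \sum_(j : 'I_n | ~~ (j <= i)) a i j <= U.
  by rewrite /U [X in _ <= X](bigD1 i) ?leqnn //= leq_addr.
have LD : \sum_(j : 'I_n | j < i) a i j + D <= \sum_(r < n) \sum_(j < n | j < r) a r j.
  rewrite [X in _ <= X](bigID (fun r : 'I_n => r <= i)) /=; apply: leq_add.
    by rewrite [X in _ <= X](bigD1 i) ?leqnn //= leq_addr.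
  apply: leq_sum => r Hri.
  rewrite [X in _ <= X](bigID (fun j : 'I_n => j <= i)) /=.
  rewrite [X in _ <= X + _](eq_bigl (fun j : 'I_n => j <= i)) ?leq_addr // => j.
  rewrite andb_idl // => Hj; rewrite -ltnNge in Hri; exact: leq_ltn_trans Hj Hri.
move: (Hr i); rewrite row; lia.
Qed.

Definition dl n d (p : 'I_n * 'I_n) : nat := if p.1 == p.2 then d else 0.

Lemma sum_plus n (a : 'I_n -> nat) i d :
  \sum_(j < n) (a j + (if j == i then d else 0)) = \sum_(j < n) a j + d.
Proof. by rewrite big_split /= -big_mkcond big_pred1_eq. Qed.

Lemma sum_minus n (a : 'I_n -> nat) i d : d <= a i ->
  \sum_(j < n) (a j - (if j == i then d else 0)) = \sum_(j < n) a j - d.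
Proof.
move=> H.
rewrite -[X in _ = X - _](@eq_bigr _ _ _ _ _ _ (fun j => (a j - (if j == i then d else 0)) + (if j == i then d else 0))).
  by rewrite sum_plus addnK.
by move=> j _; case: eqP => [->|_]; rewrite ?subn0 ?addn0 ?subnK.
Qed.

Lemma rowsP n c (A : board n c) : is_rook_placement A ->
  (forall i, \sum_(j < n) (A (i, j) : nat) = c) /\ (forall j, \sum_(i < n) (A (i, j) : nat) = c).
Proof.
by case/andP => /forallP H1 /forallP H2; split => i; apply/eqP.
Qed.

Definition fmap n c k (A : board n c) : board n k :=
  [ffun p => inord (A p - dl (c - k) p)].
Definition gmap n c k (B : board n k) : board n c :=
  [ffun p => inord (B p + dl (c - k) p)].

Lemma gmap_val n c k (B : board n k) p : k <= c -> (gmap c B p : nat) = B p + dl (c - k) p.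
Proof.
move=> kc; rewrite ffunE inordK //.
have := ltn_ord (B p); rewrite /dl; case: (_ == _); lia.
Qed.

Lemma diag_ok n c k (A : board n c) : is_rook_placement A -> drops A = k ->
  forall i, c - k <= A (i, i).
Proof.
move=> /rowsP [H1 H2] Hd i.
have := @diag_ge_gen n c (fun r j => A (r, j)) H1 H2 i.
by rewrite /drops in Hd; rewrite Hd.
Qed.

Lemma fmap_sums n c k (A : board n c) : k <= c -> is_rook_placement A -> drops A = k ->
  (forall i, \sum_(j < n) ((A (i, j) : nat) - dl (c - k) (i, j)) = k) /\
  (forall j, \sum_(i < n) ((A (i, j) : nat) - dl (c - k) (i, j)) = k).
Proof.
move=> kc HA Hd; have Hdg := diag_ok HA Hd; case: (rowsP HA) => H1 H2; split.
  move=> i; rewrite /dl /=.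
  rewrite (eq_bigr (fun j : 'I_n => (A (i, j) : nat) - (if j == i then c - k else 0))); last first.
    by move=> j _; rewrite eq_sym.
  rewrite sum_minus ?H1 //; lia.
by move=> j; rewrite /dl /= sum_minus ?H2 //; lia.
Qed.

Lemma fmap_val n c k (A : board n c) p : k <= c -> is_rook_placement A -> drops A = k ->
  (fmap k A p : nat) = A p - dl (c - k) p.
Proof.
move=> kc HA Hd; case: (fmap_sums kc HA Hd) => H1 _.
rewrite ffunE inordK // ltnS; case: p => i j /=.
rewrite -[X in _ <= X](H1 i) (bigD1 j) //= leq_addr //.
Qed.

Lemma drops_eq n c c' (A : board n c) (B : board n c') :
  (forall i j : 'I_n, j < i -> (B (i, j) : nat) = A (i, j)) -> drops B = drops A.
Proof.
move=> H; rewrite /drops; apply: eq_bigr => i _; apply: eq_bigr => j ji.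
exact: H.
Qed.

Lemma dl_off n d (i j : 'I_n) : j < i -> dl d (i, j) = 0.
Proof. by move=> ji; rewrite /dl /= -val_eqE /= gtn_eqF. Qed.

Lemma dl_le n c k (A : board n c) p : is_rook_placement A -> drops A = k ->
  dl (c - k) p <= A p.
Proof.
move=> HA Hd; case: p => i j; rewrite /dl /=; case: eqP => [->|_] //.
exact: diag_ok.
Qed.

Lemma fmap_ok n c k (A : board n c) : k <= c -> is_rook_placement A -> drops A = k ->
  is_rook_placement (fmap k A) /\ drops (fmap k A) = k.
Proof.
move=> kc HA Hd; case: (fmap_sums kc HA Hd) => H1 H2; split.
  apply/andP; split; apply/forallP => i; apply/eqP.
    by rewrite -[RHS](H1 i); apply: eq_bigr => j _; rewrite fmap_val.
  by rewrite -[RHS](H2 i); apply: eq_bigr => j _; rewrite fmap_val.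
rewrite -[RHS]Hd; apply: drops_eq => i j ji; by rewrite fmap_val // dl_off // subn0.
Qed.

Lemma gmap_ok n c k (B : board n k) : k <= c -> is_rook_placement B -> drops B = k ->
  is_rook_placement (gmap c B) /\ drops (gmap c B) = k.
Proof.
move=> kc HB Hd; case: (rowsP HB) => H1 H2; split.
  apply/andP; split; apply/forallP => i; apply/eqP.
    rewrite (eq_bigr (fun j : 'I_n => (B (i, j) : nat) + (if j == i then c - k else 0))).
      by rewrite sum_plus H1 subnKC.
    by move=> j _; rewrite gmap_val // /dl /= eq_sym.
  rewrite (eq_bigr (fun j : 'I_n => (B (j, i) : nat) + (if j == i then c - k else 0))).
    by rewrite sum_plus H2 subnKC.
  by move=> j _; rewrite gmap_val.
rewrite -[RHS]Hd; apply: drops_eq => i j ji; by rewrite gmap_val // dl_off // addn0.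
Qed.

Theorem lemma5p1 (n k c : nat) :
  1 <= n -> k <= c -> 1 <= c -> gen_euler n k c = gen_euler n k k.
Proof.
move=> _ kc _; rewrite /gen_euler.
set Sc := [set A : board n c | _].
set Sk := [set A : board n k | _].
apply/eqP; rewrite eqn_leq; apply/andP; split.
  have inj : {in Sc &, injective (fmap k)}.
    move=> A1 A2; rewrite !inE => /andP [H1 /eqP D1] /andP [H2 /eqP D2] E.
    apply/ffunP => p; apply: val_inj => /=.
    have := congr1 (fun F : board n k => (F p : nat)) E; rewrite /= !fmap_val //.
    have := dl_le p H1 D1; have := dl_le p H2 D2; lia.
  rewrite -(card_in_imset inj); apply: subset_leq_card.
  apply/subsetP => B /imsetP [A]; rewrite inE => /andP [HA /eqP DA] ->.
  by case: (fmap_ok kc HA DA) => P1 P2; rewrite inE P1 P2 eqxx.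
have inj : {in Sk &, injective (@gmap n c k)}.
  move=> A1 A2; rewrite !inE => /andP [H1 /eqP D1] /andP [H2 /eqP D2] E.
  apply/ffunP => p; apply: val_inj => /=.
  have := congr1 (fun F : board n c => (F p : nat)) E; rewrite /= !gmap_val //; lia.
rewrite -(card_in_imset inj); apply: subset_leq_card.
apply/subsetP => B /imsetP [A]; rewrite inE => /andP [HA /eqP DA] ->.
by case: (gmap_ok kc HA DA) => P1 P2; rewrite inE P1 P2 eqxx.
Qed.
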